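(* Let $a,b,c\in\mathbb R$ with $c+1>a+b$ and $c$ not a nonpositive integer, and for real $q>-1$ put \[ F(q):={}_3F_2\!\left({a,b,q\atop c,q+1};1\right). \] Then \[ \frac{(q+1-a)(q+1-b)}{q+1}F(q+1)-(q+1-c)F(q)=\frac{\Gamma(c)\,\Gamma(c+1-a-b)}{\Gamma(c-a)\,\Gamma(c-b)}, \] with the convention $1/\Gamma(-n)=0$ for nonnegative integers $n$.
   Context: ${}_3F_2\!\left({a_1,a_2,a_3\atop b_1,b_2};x\right)=\sum_{n\ge0}\frac{(a_1)_n(a_2)_n(a_3)_n}{(b_1)_n(b_2)_n}\frac{x^n}{n!}$ with $(x)_n=x(x+1)\cdots(x+n-1)$; at $x=1$ it converges when $b_1+b_2-a_1-a_2-a_3>0$. *)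

(* Defs.v *)
From Stdlib Require Import Reals Lra Arith Factorial ClassicalEpsilon.
Open Scope R_scope.

Fixpoint poch (x : R) (n : nat) : R :=
  match n with
  | O => 1
  | S m => poch x m * (x + INR m)
  end.

Definition hyp32_term (a1 a2 a3 b1 b2 : R) (n : nat) : R :=
  poch a1 n * poch a2 n * poch a3 n / (poch b1 n * poch b2 n * INR (fact n)).

(* Value at x = 1: the limit of the partial sums (chosen by classical
   description; it is the actual sum whenever the series converges). *)
Definition hyp32_at1 (a1 a2 a3 b1 b2 : R) : R :=
  epsilon (inhabits 0)
    (fun l => Un_cv (fun N => sum_f_R0 (hyp32_term a1 a2 a3 b1 b2) N) l).

(* Reciprocal Gamma function via the Euler–Gauss product:
   1/Gamma(x) = lim_n x(x+1)...(x+n) / (n! n^x).  This is entire and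
   vanishes exactly at x = 0,-1,-2,..., i.e. it encodes the convention
   1/Gamma(-n) = 0.  We use index n+1 to keep n^x well defined. *)
Definition rgamma_seq (x : R) (n : nat) : R :=
  prod_f_R0 (fun k => x + INR k) (S n)
  / (INR (fact (S n)) * Rpower (INR (S n)) x).

Definition rgamma (x : R) : R :=
  epsilon (inhabits 0) (fun l => Un_cv (rgamma_seq x) l).

(* Main.v *)
Require Import Defs.
From Stdlib Require Import Reals Lra Lia Psatz ClassicalEpsilon Classical Factorial.
Open Scope R_scope.

Lemma cv_shift (u : nat -> R) N l : Un_cv (fun n => u (n + N)%nat) l -> Un_cv u l.
Proof.
  intros H eps Heps. destruct (H eps Heps) as [M HM]. exists (M + N)%nat.
  intros n Hn. replace n with ((n - N) + N)%nat by lia. apply HM. lia.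
Qed.

Lemma cv_ext_ev (u v : nat -> R) N l : (forall n, (N <= n)%nat -> u n = v n) ->
  Un_cv u l -> Un_cv v l.
Proof.
  intros He H eps Heps. destruct (H eps Heps) as [M HM]. exists (M + N)%nat.
  intros n Hn. rewrite <- He by lia. apply HM. lia.
Qed.

Lemma tele_cv (u D : nat -> R) (N0 : nat) :
  (forall n, (N0 <= n)%nat -> Rabs (u (S n) - u n) <= D n - D (S n)) ->
  (forall n, 0 <= D n) -> exists l, Un_cv u l.
Proof.
  intros H HD.
  assert (Hmon: forall k n, (N0 <= n)%nat -> Rabs (u (n + k)%nat - u n) <= D n - D (n+k)%nat).
  { induction k; intros n Hn.
    - rewrite Nat.add_0_r. unfold Rminus; rewrite Rplus_opp_r, Rabs_R0. lra.
    - replace (n + S k)%nat with (S (n+k)) by lia.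
      specialize (IHk n Hn). specialize (H (n+k)%nat ltac:(lia)).
      replace (u (S (n+k)) - u n) with ((u (S (n+k)) - u (n+k)%nat) + (u (n+k)%nat - u n)) by ring.
      eapply Rle_trans. apply Rabs_triang. lra. }
  destruct (decreasing_cv (fun n => D (n + N0)%nat)) as [ld Hld].
  { intros n. simpl. specialize (H (n+N0)%nat ltac:(lia)).
    pose proof (Rabs_pos (u (S (n + N0)) - u (n + N0)%nat)). lra. }
  { exists 0. intros x [n ->]. unfold opp_seq. specialize (HD (n+N0)%nat). lra. }
  assert (Hc : Cauchy_crit u).
  { intros eps Heps. destruct (Hld (eps/2) ltac:(lra)) as [M HM].
    exists (M + N0)%nat. intros n m Hn Hm. unfold R_dist.
    assert (Hnm: forall n m, (n >= M + N0)%nat -> (m >= M+N0)%nat -> (m <= n)%nat ->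
       Rabs (u n - u m) < eps).
    { clear n m Hn Hm. intros n m Hn Hm Hle.
      pose proof (Hmon (n - m)%nat m ltac:(lia)) as Hk.
      replace (m + (n - m))%nat with n in Hk by lia.
      pose proof (HM (m - N0)%nat ltac:(lia)) as H1.
      pose proof (HM (n - N0)%nat ltac:(lia)) as H2.
      replace (m - N0 + N0)%nat with m in H1 by lia.
      replace (n - N0 + N0)%nat with n in H2 by lia.
      unfold R_dist in H1, H2. apply Rabs_def2 in H1. apply Rabs_def2 in H2. lra. }
    destruct (Nat.le_gt_cases m n).
    - apply Hnm; lia.
    - rewrite Rabs_minus_sym. apply Hnm; lia. }
  destruct (R_complete u Hc) as [l Hl]. exists l; exact Hl.
Qed.

Lemma ln_le_y (y : R) : -1 < y -> ln (1 + y) <= y.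
Proof.
  intros Hy. pose proof (exp_ineq1_le y) as H.
  destruct (Rle_lt_or_eq_dec _ _ H) as [Hl|He].
  - left. rewrite <- (ln_exp y) at 2. apply ln_increasing; lra.
  - rewrite He, ln_exp. lra.
Qed.

Lemma ln_ge_y (y : R) : -1 < y -> y / (1 + y) <= ln (1 + y).
Proof.
  intros Hy. assert (Hz : -1 < - y / (1 + y)).
  { apply (Rmult_lt_reg_r (1+y)). lra. field_simplify; lra. }
  pose proof (ln_le_y _ Hz) as H.
  replace (1 + - y / (1 + y)) with (/ (1 + y)) in H by (field; lra).
  rewrite ln_Rinv in H by lra.
  replace (- y / (1 + y)) with (- (y / (1+y))) in H by (field; lra). lra.
Qed.

Lemma poch_S x n : poch x (S n) = poch x n * (x + INR n).
Proof. reflexivity. Qed.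

Lemma prod_poch x n : prod_f_R0 (fun k => x + INR k) n = poch x (S n).
Proof.
  induction n.
  - simpl. ring.
  - simpl prod_f_R0. rewrite IHn. rewrite (poch_S x (S n)). reflexivity.
Qed.

Lemma poch_shift x n : poch x (S n) = x * poch (x + 1) n.
Proof.
  induction n.
  - simpl. ring.
  - rewrite poch_S, IHn, poch_S. rewrite S_INR. ring.
Qed.

Lemma poch_nz x n : (forall k, x <> - INR k) -> poch x n <> 0.
Proof.
  intros H. induction n.
  - simpl. lra.
  - rewrite poch_S. apply Rmult_integral_contrapositive. split; auto.
    intro E. apply (H n). lra.
Qed.

Lemma poch_pos x n : 0 < x -> 0 < poch x n.
Proof.
  intros H. induction n.
  - simpl. lra.
  - rewrite poch_S. apply Rmult_lt_0_compat; auto. pose proof (pos_INR n). lra.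
Qed.

Lemma poch_zero x k m : x = - INR k -> (k < m)%nat -> poch x m = 0.
Proof.
  intros Hx. induction m; intros Hm.
  - lia.
  - rewrite poch_S. destruct (Nat.eq_dec k m) as [->|Hne].
    + rewrite Hx. ring.
    + rewrite IHm by lia. ring.
Qed.

Lemma cv_const (l : R) : Un_cv (fun _ => l) l.
Proof. intros eps Heps. exists O. intros. unfold R_dist. rewrite Rminus_diag, Rabs_R0. lra. Qed.

Lemma Rpower_gt0 a x : 0 < Rpower a x.
Proof. unfold Rpower. apply exp_pos. Qed.

Lemma dbound x P Q : Q > 0 -> P = Q + 1 -> P + x >= P/2 ->
  Rabs (ln (1 + x/P) - x * ln (1 + 1/Q)) <= (2*x*x + Rabs x)/(Q*P).
Proof.
  intros HQ HP Hx.
  assert (HPp : P > 0) by lra.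
  assert (Hy1 : -1 < x / P).
  { apply (Rmult_lt_reg_r P); auto. field_simplify; lra. }
  assert (Hy2 : -1 < 1 / Q).
  { assert (0 < 1/Q) by (apply Rdiv_lt_0_compat; lra). lra. }
  pose proof (ln_le_y _ Hy1) as A1. pose proof (ln_ge_y _ Hy1) as A2.
  pose proof (ln_le_y _ Hy2) as B1. pose proof (ln_ge_y _ Hy2) as B2.
  set (l1 := ln (1 + x/P)) in *. set (L2 := ln (1 + 1/Q)) in *.
  replace (x / P / (1 + x / P)) with (x / (P + x)) in A2 by (field; lra).
  replace (1 / Q / (1 + 1 / Q)) with (1 / P) in B2 by (subst P; field; lra).
  assert (SA : Rabs (l1 - x/P) <= 2*x*x/(Q*P)).
  { rewrite Rabs_left1 by lra.
    assert (x / P - x / (P + x) = x*x/(P*(P+x))) by (field; lra).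
    assert (x*x/(P*(P+x)) <= 2*x*x/(Q*P)).
    { replace (2*x*x/(Q*P)) with (x*x * / (Q*P/2)) by (field; lra).
      unfold Rdiv. apply Rmult_le_compat_l. nra.
      apply Rinv_le_contravar. nra. nra. }
    lra. }
  assert (SB : Rabs (x/P - x * L2) <= Rabs x/(Q*P)).
  { replace (x/P - x*L2) with (x * (1/P - L2)) by (field; lra).
    rewrite Rabs_mult. unfold Rdiv. rewrite (Rmult_comm (Rabs x)).
    rewrite (Rmult_comm (Rabs x)).
    apply Rmult_le_compat_r. apply Rabs_pos.
    rewrite Rabs_left1 by lra.
    assert (1/Q - 1/P = / (Q*P)) by (subst P; field; lra). lra. }
  replace (l1 - x * L2) with ((l1 - x/P) + (x/P - x*L2)) by ring.
  eapply Rle_trans. apply Rabs_triang.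
  replace ((2*x*x + Rabs x)/(Q*P)) with (2*x*x/(Q*P) + Rabs x/(Q*P)) by (field; lra).
  lra.
Qed.

Lemma rgs_step x n : rgamma_seq x (S n) = rgamma_seq x n *
  (((x + INR (S (S n))) / INR (S (S n))) * (Rpower (INR (S n)) x / Rpower (INR (S (S n))) x)).
Proof.
  unfold rgamma_seq. rewrite !prod_poch. rewrite (poch_S x (S (S n))).
  rewrite (fact_simpl (S n)), mult_INR.
  pose proof (INR_fact_lt_0 (S n)). pose proof (Rpower_gt0 (INR (S n)) x).
  pose proof (Rpower_gt0 (INR (S (S n))) x).
  assert (INR (S (S n)) > 0) by (apply lt_0_INR; lia).
  field. repeat split; lra.
Qed.

Lemma rgamma_cv x : exists l, Un_cv (rgamma_seq x) l /\ ((forall k, x <> - INR k) -> l <> 0).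
Proof.
  destruct (classic (exists k, x = - INR k)) as [[k Hk]|Hnp].
  - exists 0. split.
    + apply (cv_ext_ev (fun _ => 0) _ k).
      * intros n Hn. unfold rgamma_seq. rewrite prod_poch.
        rewrite (poch_zero x k) by (auto; lia). unfold Rdiv; ring.
      * apply cv_const.
    + intros H. exfalso. apply (H k Hk).
  - assert (Hnp' : forall k, x <> - INR k) by (intros k E; apply Hnp; eauto).
    set (s := rgamma_seq x).
    assert (Hsnz : forall n, s n <> 0).
    { intros n. unfold s, rgamma_seq. rewrite prod_poch.
      apply Rmult_integral_contrapositive; split. apply poch_nz; auto.
      apply Rinv_neq_0_compat. apply Rmult_integral_contrapositive; split.
      apply INR_fact_neq_0. apply Rgt_not_eq, Rpower_gt0. }
    destruct (INR_archimed 1 (2 * Rabs x) ltac:(lra)) as [N1 HN1].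
    rewrite Rmult_1_r in HN1.
    pose proof (Rle_abs (-x)) as Hax. rewrite Rabs_Ropp in Hax.
    set (rho := fun n => ((x + INR (S (S n))) / INR (S (S n))) *
        (Rpower (INR (S n)) x / Rpower (INR (S (S n))) x)).
    assert (Hrho : forall n, (N1 <= n)%nat -> 0 < rho n).
    { intros n Hn. unfold rho. apply le_INR in Hn. rewrite !S_INR.
      pose proof (Rpower_gt0 (INR n + 1) x). pose proof (Rpower_gt0 (INR n + 1 + 1) x).
      pose proof (pos_INR n).
      apply Rmult_lt_0_compat; apply Rdiv_lt_0_compat; lra. }
    assert (Hstep : forall n, s (S n) = s n * rho n) by (intros; apply rgs_step).
    assert (Hsign : forall d, s (N1 + d)%nat * s N1 > 0).
    { induction d.
      - rewrite Nat.add_0_r. destruct (Rlt_dec 0 (s N1)). nra.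
        assert (s N1 < 0) by (specialize (Hsnz N1); lra). nra.
      - replace (N1 + S d)%nat with (S (N1 + d)) by lia. rewrite Hstep.
        pose proof (Hrho (N1 + d)%nat ltac:(lia)). nra. }
    set (g := fun n => ln (Rabs (s n))).
    set (K := 2*x*x + Rabs x).
    set (D := fun n : nat => K / (INR n + 1)).
    assert (HK : 0 <= K) by (unfold K; pose proof (Rabs_pos x); nra).
    assert (Hg : forall n, (N1 <= n)%nat -> Rabs (g (S n) - g n) <= D n - D (S n)).
    { intros n Hn.
      assert (E1 : g (S n) - g n = ln (1 + x / INR (S (S n))) - x * ln (1 + 1 / INR (S n))).
      { unfold g. rewrite Hstep. rewrite Rabs_mult. rewrite (Rabs_pos_eq (rho n)) by (left; auto).
        pose proof (Rabs_pos_lt _ (Hsnz n)).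
        rewrite ln_mult by (auto; apply Hrho; auto).
        unfold rho. pose proof (Hrho n Hn) as Hr. unfold rho in Hr.
        assert (HP : INR (S (S n)) > 0) by (apply lt_0_INR; lia).
        assert (HQ : INR (S n) > 0) by (apply lt_0_INR; lia).
        pose proof (Rpower_gt0 (INR (S n)) x). pose proof (Rpower_gt0 (INR (S (S n))) x).
        assert (Hpos1 : 0 < (x + INR (S (S n))) / INR (S (S n))).
        { apply le_INR in Hn. rewrite !S_INR in *. apply Rdiv_lt_0_compat; lra. }
        rewrite ln_mult by (auto; apply Rdiv_lt_0_compat; auto).
        unfold Rdiv at 2. rewrite ln_mult by (auto; apply Rinv_0_lt_compat; auto).
        rewrite ln_Rinv by auto. rewrite !ln_Rpower.
        replace ((x + INR (S (S n))) / INR (S (S n))) with (1 + x / INR (S (S n))) by (field; lra).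
        replace (1 + 1 / INR (S n)) with (INR (S (S n)) * / INR (S n))
          by (rewrite (S_INR (S n)); field; lra).
        rewrite ln_mult by (auto; apply Rinv_0_lt_compat; auto).
        rewrite ln_Rinv by auto. ring. }
      rewrite E1.
      assert (HQ : INR (S n) > 0) by (apply lt_0_INR; lia).
      eapply Rle_trans. apply dbound.
      - exact HQ.
      - apply S_INR.
      - apply le_INR in Hn. rewrite !S_INR. lra.
      - unfold D. rewrite !S_INR. right. fold K. field. pose proof (pos_INR n). lra. }
    destruct (tele_cv g D N1 Hg) as [lg Hlg].
    { intros n. unfold D. pose proof (pos_INR n). unfold Rdiv. apply Rmult_le_pos; auto. left; apply Rinv_0_lt_compat; lra. }
    set (sg := s N1 / Rabs (s N1)).
    exists (sg * exp lg). split.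
    + apply (cv_ext_ev (fun n => sg * exp (g n)) _ N1).
      * intros n Hn. unfold g. rewrite exp_ln by (apply Rabs_pos_lt; auto).
        pose proof (Hsign (n - N1)%nat) as Hs. replace (N1 + (n - N1))%nat with n in Hs by lia.
        unfold sg. pose proof (Hsnz N1).
        destruct (Rlt_dec 0 (s N1)).
        -- rewrite !Rabs_pos_eq by nra. field. lra.
        -- rewrite !Rabs_left by nra. field. lra.
      * apply CV_mult. apply cv_const.
        apply continuity_seq. apply derivable_continuous_pt. apply derivable_exp. exact Hlg.
    + intros _. unfold sg. apply Rmult_integral_contrapositive; split.
      * unfold Rdiv. apply Rmult_integral_contrapositive; split. auto.
        apply Rinv_neq_0_compat. apply Rabs_no_R0. auto.
      * apply exp_neq_0.
Qed.

Lemma rgamma_eq x l : Un_cv (rgamma_seq x) l -> rgamma x = l.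
Proof.
  intros H. unfold rgamma.
  pose proof (epsilon_spec (inhabits 0) (fun l => Un_cv (rgamma_seq x) l) (ex_intro _ l H)) as H2.
  eapply UL_sequence; eauto.
Qed.

Definition t (a b c : R) (n : nat) : R := poch a n * poch b n / (poch c n * INR (fact n)).
Definition w (p : R) (n : nat) : R := poch p n / poch (p + 1) n.

Lemma t_S a b c n : (forall k, c <> - INR k) ->
  t a b c (S n) = t a b c n * ((a + INR n) * (b + INR n) / ((c + INR n) * INR (S n))).
Proof.
  intros hc. unfold t. rewrite !poch_S. rewrite fact_simpl, mult_INR.
  pose proof (poch_nz c n hc). pose proof (INR_fact_lt_0 n).
  assert (c + INR n <> 0) by (intro E; apply (hc n); lra).
  assert (INR (S n) > 0) by (apply lt_0_INR; lia).
  field. repeat split; lra.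
Qed.

Lemma t_c1 a b c n : (forall k, c <> - INR k) ->
  t a b (c + 1) n = t a b c n * (c / (c + INR n)).
Proof.
  intros hc. unfold t.
  pose proof (poch_shift c n) as Hs. rewrite poch_S in Hs.
  pose proof (poch_nz c n hc). pose proof (INR_fact_lt_0 n).
  assert (c + INR n <> 0) by (intro E; apply (hc n); lra).
  assert (c <> 0) by (intro E; apply (hc O); simpl; lra).
  assert (Hp : poch (c+1) n = poch c n * (c + INR n) / c) by (rewrite Hs; field; auto).
  rewrite Hp. field. repeat split; lra.
Qed.

Lemma w_0 p : w p 0 = 1.
Proof. unfold w. simpl. field. Qed.

Lemma w_S p n : p + 1 > 0 -> w p (S n) = p / (p + INR (S n)).
Proof.
  intros Hp. unfold w. rewrite poch_shift. rewrite (poch_S (p+1) n).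
  pose proof (poch_pos (p+1) n Hp). rewrite S_INR.
  pose proof (pos_INR n). field. split; lra.
Qed.

Lemma hyp_term a b c p n : p + 1 > 0 -> (forall k, c <> - INR k) ->
  hyp32_term a b p c (p + 1) n = t a b c n * w p n.
Proof.
  intros Hp hc. unfold hyp32_term, t, w.
  pose proof (poch_nz c n hc). pose proof (INR_fact_lt_0 n).
  pose proof (poch_pos (p+1) n Hp).
  field. repeat split; lra.
Qed.

Lemma squeeze0 (u z : nat -> R) C N : (forall n, (N <= n)%nat -> Rabs (u n) <= C * z n) ->
  Un_cv z 0 -> Un_cv u 0.
Proof.
  intros H Hz eps Heps.
  destruct (Hz (eps / (Rabs C + 1))) as [M HM].
  { apply Rdiv_lt_0_compat; auto. pose proof (Rabs_pos C); lra. }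
  exists (M + N)%nat. intros n Hn. unfold R_dist in *. rewrite Rminus_0_r.
  specialize (HM n ltac:(lia)). rewrite Rminus_0_r in HM. specialize (H n ltac:(lia)).
  pose proof (Rabs_pos C). pose proof (Rle_abs C). pose proof (Rabs_pos (z n)). pose proof (Rle_abs (z n)).
  assert (Rabs C * Rabs (z n) < eps).
  { apply (Rmult_lt_reg_r (/ (Rabs C + 1))). apply Rinv_0_lt_compat; lra.
    apply (Rle_lt_trans _ (Rabs (z n))).
    - replace (Rabs C * Rabs (z n) * / (Rabs C + 1)) with (Rabs (z n) * (Rabs C / (Rabs C + 1))) by (field; lra).
      rewrite <- (Rmult_1_r (Rabs (z n))) at 2. apply Rmult_le_compat_l; auto.
      apply (Rmult_le_reg_r (Rabs C + 1)). lra. unfold Rdiv. rewrite Rmult_assoc, Rinv_l by lra. lra.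
    - exact HM. }
  assert (C * z n <= Rabs C * Rabs (z n)).
  { rewrite <- Rabs_mult. apply Rle_abs. }
  lra.
Qed.

Lemma Rdiv_le_0_compat (x y : R) : 0 <= x -> 0 < y -> 0 <= x / y.
Proof. intros. unfold Rdiv. apply Rmult_le_pos; auto. left; apply Rinv_0_lt_compat; auto. Qed.

Lemma neg_abs (x : R) : - Rabs x <= x.
Proof. pose proof (Rle_abs (-x)). rewrite Rabs_Ropp in H. lra. Qed.

Lemma poly_ev a b c p : c + 1 > a + b -> exists N0 : nat, (1 <= N0)%nat /\ forall n, (N0 <= n)%nat ->
  a + INR n > 0 /\ b + INR n > 0 /\ c + INR n > 0 /\ p + INR n > 0 /\
  (INR n + 1 + (c+1-a-b)/2) * (a + INR n) * (b + INR n) * (p + INR n) <=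
    INR n * (INR n + 1) * (c + INR n) * (p + INR n + 1).
Proof.
  intros habc.
  set (d := (c+1-a-b)/2).
  assert (Hd : d > 0) by (unfold d; lra).
  set (s := a + b). set (r := a * b).
  set (al2 := c*(p+1)+c+p+1 - r - s*p - (1+d)*(s+p)).
  set (al1 := c*(p+1) - r*p - (1+d)*(r + s*p)).
  set (al0 := -(1+d)*r*p).
  set (M := Rabs al2 + Rabs al1 + Rabs al0).
  destruct (INR_archimed 1 (Rabs a + Rabs b + Rabs c + Rabs p + 1 + M / d) ltac:(lra)) as [N0 HN0].
  rewrite Rmult_1_r in HN0.
  assert (HM : 0 <= M) by (unfold M; pose proof (Rabs_pos al2); pose proof (Rabs_pos al1); pose proof (Rabs_pos al0); lra).
  assert (HMd : 0 <= M / d) by (unfold Rdiv; apply Rmult_le_pos; auto; left; apply Rinv_0_lt_compat; auto).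
  pose proof (Rabs_pos a). pose proof (Rabs_pos b). pose proof (Rabs_pos c). pose proof (Rabs_pos p).
  exists N0. split.
  { destruct N0. simpl in HN0. lra. lia. }
  intros n Hn. apply le_INR in Hn. set (x := INR n) in *.
  pose proof (neg_abs a). pose proof (neg_abs b). pose proof (neg_abs c). pose proof (neg_abs p).
  split. lra. split. lra. split. lra. split. lra.
  assert (Hx1 : x >= 1) by lra.
  assert (Hdx : d * x >= M).
  { assert (x >= M / d) by lra.
    apply Rle_ge. apply (Rmult_le_reg_r (/ d)). apply Rinv_0_lt_compat; auto.
    replace (d * x * / d) with x by (field; lra). unfold Rdiv in *. lra. }
  assert (Hid : x * (x + 1) * (c + x) * (p + x + 1) -
     (x + 1 + d) * (a + x) * (b + x) * (p + x) =
     (c + 1 - a - b - d) * x^3 + al2 * x^2 + al1 * x + al0).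
  { unfold al2, al1, al0, s, r. ring. }
  assert (Hc3 : c + 1 - a - b - d = d) by (unfold d; lra).
  rewrite Hc3 in Hid.
  pose proof (neg_abs al2). pose proof (neg_abs al1). pose proof (neg_abs al0).
  pose proof (Rabs_pos al2). pose proof (Rabs_pos al1). pose proof (Rabs_pos al0).
  assert (d * x^3 >= M * x^2) by (replace (d*x^3) with ((d*x)*x^2) by ring; nra).
  assert (al2 * x^2 >= - Rabs al2 * x^2) by nra.
  assert (Hxx : x <= x^2) by nra.
  assert (al1 * x >= - Rabs al1 * x^2).
  { assert (al1 * x >= - Rabs al1 * x) by nra.
    assert (Rabs al1 * x <= Rabs al1 * x^2) by (apply Rmult_le_compat_l; lra). lra. }
  assert (al0 >= - Rabs al0 * x^2).
  { assert (Rabs al0 * 1 <= Rabs al0 * x^2) by (apply Rmult_le_compat_l; nra). lra. }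
  unfold M in *. nra.
Qed.

Lemma sum_S (f : nat -> R) n : sum_f_R0 f (S n) = sum_f_R0 f n + f (S n).
Proof. reflexivity. Qed.

Lemma hyp_cv a b c p : c + 1 > a + b -> (forall k, c <> - INR k) -> p > -1 ->
  (exists l, Un_cv (fun N => sum_f_R0 (fun n => t a b c n * w p n) N) l) /\ Un_cv (t a b c) 0.
Proof.
  intros habc hc hp.
  destruct (poly_ev a b c p habc) as [N0 [HN01 HN0]].
  set (d := (c+1-a-b)/2). assert (Hd: d>0) by (unfold d; lra).
  set (v := fun n => Rabs (t a b c n) / (p + INR n)).
  assert (HpS : forall n, p + INR (S n) > 0) by (intros n; rewrite S_INR; pose proof (pos_INR n); lra).
  assert (Hv0 : forall n, 0 <= v (S n)).
  { intros n. unfold v. unfold Rdiv. apply Rmult_le_pos. apply Rabs_pos. left; apply Rinv_0_lt_compat; apply HpS. }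
  assert (Kum : forall n, (N0 <= n)%nat -> (INR n + 1 + d) * v (S n) <= INR n * v n).
  { intros n Hn. destruct (HN0 n Hn) as [Ha [Hb [Hc [Hp Hpoly]]]].
    unfold v. rewrite t_S by auto. rewrite Rabs_mult.
    set (x := INR n) in *.
    assert (Hx0 : 0 <= x) by (unfold x; apply pos_INR).
    assert (HS : INR (S n) = x + 1) by (unfold x; apply S_INR).
    rewrite HS.
    assert (Hq : 0 <= (a + x) * (b + x) / ((c + x) * (x + 1))).
    { left. apply Rdiv_lt_0_compat. apply Rmult_lt_0_compat; lra. apply Rmult_lt_0_compat; lra. }
    rewrite (Rabs_pos_eq _ Hq).
    set (T := Rabs (t a b c n)). assert (HT : 0 <= T) by apply Rabs_pos.
    replace ((x + 1 + d) * (T * ((a + x) * (b + x) / ((c + x) * (x + 1))) / (p + (x + 1))))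
      with (T * ((x + 1 + d) * (a + x) * (b + x) * (p + x)) * / ((c + x) * (x + 1) * (p + x + 1) * (p + x)))
      by (field; repeat split; lra).
    replace (x * (T / (p + x)))
      with (T * (x * (x + 1) * (c + x) * (p + x + 1)) * / ((c + x) * (x + 1) * (p + x + 1) * (p + x)))
      by (field; repeat split; lra).
    apply Rmult_le_compat_r. left; apply Rinv_0_lt_compat. 
    repeat apply Rmult_lt_0_compat; lra.
    apply Rmult_le_compat_l; auto. }
  assert (Hvn : forall n, (N0 <= n)%nat -> 0 <= v n).
  { intros n Hn. destruct n. lia. apply Hv0. }
  set (z := fun n => INR n * v n).
  assert (Hz0 : forall n, (N0 <= n)%nat -> 0 <= z n).
  { intros n Hn. unfold z. apply Rmult_le_pos. apply pos_INR. auto. }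
  assert (Hzdec : forall n, (N0 <= n)%nat -> z (S n) <= z n).
  { intros n Hn. unfold z. rewrite S_INR. pose proof (Kum n Hn). pose proof (Hv0 n). nra. }
  split.
  - set (U := fun N => sum_f_R0 (fun n => t a b c n * w p n) N).
    set (D := fun n => Rabs p * z n / d).
    destruct (tele_cv U D N0) as [l Hl].
    + intros n Hn. unfold U. rewrite sum_S.
      replace (sum_f_R0 (fun n0 : nat => t a b c n0 * w p n0) n + t a b c (S n) * w p (S n) -
        sum_f_R0 (fun n0 : nat => t a b c n0 * w p n0) n) with (t a b c (S n) * w p (S n)) by ring.
      rewrite w_S by lra. rewrite Rabs_mult.
      assert (E : Rabs (p / (p + INR (S n))) = Rabs p / (p + INR (S n))).
      { unfold Rdiv. rewrite Rabs_mult, Rabs_inv. rewrite (Rabs_pos_eq (p + INR (S n))) by (left; apply HpS). reflexivity. }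
      rewrite E.
      replace (Rabs (t a b c (S n)) * (Rabs p / (p + INR (S n)))) with (Rabs p * v (S n))
        by (unfold v; field; specialize (HpS n); lra).
      unfold D, z. rewrite S_INR. pose proof (Kum n Hn). pose proof (Rabs_pos p).
      pose proof (Hv0 n).
      replace (Rabs p * (INR n * v n) / d - Rabs p * ((INR n + 1) * v (S n)) / d)
        with (Rabs p * ((INR n * v n - (INR n + 1) * v (S n)) / d)) by (field; lra).
      apply Rmult_le_compat_l; auto.
      apply (Rmult_le_reg_r d); auto. unfold Rdiv. rewrite Rmult_assoc, Rinv_l by lra. nra.
    + intros n. unfold D. destruct (Compare_dec.le_lt_dec N0 n) as [Hle|Hlt].
      * unfold Rdiv. apply Rmult_le_pos. apply Rmult_le_pos. apply Rabs_pos. auto. left; apply Rinv_0_lt_compat; auto.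
      * destruct n. unfold z. simpl. unfold Rdiv. rewrite Rmult_0_l, Rmult_0_r, Rmult_0_l. lra.
        unfold z. pose proof (Hv0 n). pose proof (pos_INR (S n)). pose proof (Rabs_pos p). unfold Rdiv. apply Rmult_le_pos. apply Rmult_le_pos; auto. apply Rmult_le_pos; auto. left; apply Rinv_0_lt_compat; auto.
    + exists l. exact Hl.
  - set (V := fun N => sum_f_R0 v N).
    set (D := fun n => z n / d).
    destruct (tele_cv V D N0) as [lV HlV].
    + intros n Hn. unfold V. rewrite sum_S.
      replace (sum_f_R0 v n + v (S n) - sum_f_R0 v n) with (v (S n)) by ring.
      rewrite Rabs_pos_eq by auto.
      unfold D, z. rewrite S_INR. pose proof (Kum n Hn).
      apply (Rmult_le_reg_r d); auto. unfold Rdiv.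
      replace ((INR n * v n * / d - (INR n + 1) * v (S n) * / d) * d)
        with (INR n * v n - (INR n + 1) * v (S n)) by (field; lra). nra.
    + intros n. unfold D. destruct (Compare_dec.le_lt_dec N0 n) as [Hle|Hlt].
      * unfold Rdiv. apply Rmult_le_pos. auto. left; apply Rinv_0_lt_compat; auto.
      * destruct n. unfold z. simpl. unfold Rdiv. rewrite !Rmult_0_l. lra.
        unfold z. pose proof (Hv0 n). pose proof (pos_INR (S n)). unfold Rdiv. apply Rmult_le_pos. apply Rmult_le_pos; auto. left; apply Rinv_0_lt_compat; auto.
    + assert (Hlow : forall m dd, (N0 <= m)%nat -> V (m + dd)%nat - V m >= INR dd * z (m + dd)%nat / INR (m + dd)).
      { intros m dd Hm. induction dd.
        - rewrite Nat.add_0_r. simpl. unfold Rdiv. rewrite !Rmult_0_l. lra.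
        - replace (m + S dd)%nat with (S (m + dd)) by lia.
          unfold V in *. rewrite sum_S.
          assert (Hk : INR (m + dd) >= 1) by (apply Rle_ge; apply (le_INR 1); lia).
          pose proof (Hzdec (m+dd)%nat ltac:(lia)). pose proof (Hz0 (S (m+dd)) ltac:(lia)).
          assert (Hv : v (S (m + dd)) = z (S (m+dd)) / INR (S (m+dd))).
          { unfold z. rewrite S_INR. field. lra. }
          rewrite Hv. rewrite !S_INR in *.
          set (k := INR (m + dd)) in *. set (Z1 := z (m+dd)%nat) in *. set (Z2 := z (S (m+dd))) in *.
          assert (INR dd * Z1 / k >= INR dd * Z2 / (k + 1)).
          { pose proof (pos_INR dd). unfold Rdiv.
            apply Rle_ge. apply Rmult_le_compat; try nra.
            left; apply Rinv_0_lt_compat; lra.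
            apply Rinv_le_contravar; lra. }
          assert ((INR dd + 1) * Z2 / (k + 1) = INR dd * Z2 / (k+1) + Z2 / (k + 1)) by (field; lra).
          lra. }
      assert (Hzcv : Un_cv z 0).
      { intros eps Heps. destruct (HlV (eps/4) ltac:(lra)) as [M HM].
        exists (2 * (M + N0))%nat. intros n Hn. unfold R_dist. rewrite Rminus_0_r.
        set (m := (M + N0)%nat).
        pose proof (Hlow m (n - m)%nat ltac:(lia)) as Hl.
        replace (m + (n - m))%nat with n in Hl by lia.
        pose proof (HM n ltac:(lia)) as H1. pose proof (HM m ltac:(lia)) as H2.
        unfold R_dist in H1, H2. apply Rabs_def2 in H1. apply Rabs_def2 in H2.
        rewrite Rabs_pos_eq by (apply Hz0; lia).
        assert (Hnm : INR n <= 2 * INR (n - m)).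
        { assert (HH : INR n <= INR (2 * (n - m))) by (apply le_INR; lia).
          rewrite mult_INR in HH. simpl (INR 2) in HH. lra. }
        assert (Hn1 : INR n >= 1) by (apply Rle_ge; apply (le_INR 1); lia).
        pose proof (Hz0 n ltac:(lia)).
        assert (z n <= 2 * (V n - V m)).
        { assert (INR (n - m) * z n / INR n >= z n / 2).
          { apply Rle_ge. apply (Rmult_le_reg_r (2 * INR n)). lra.
            unfold Rdiv. replace (z n * / 2 * (2 * INR n)) with (z n * INR n) by (field).
            replace (INR (n - m) * z n * / INR n * (2 * INR n)) with (z n * (2 * INR (n - m))) by (field; lra).
            apply Rmult_le_compat_l; lra. }
          lra. }
        lra. }
      apply (squeeze0 _ z (1 + Rabs p) N0).
      * intros n Hn. destruct (HN0 n Hn) as [_ [_ [_ [Hp _]]]].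
        assert (Ht : Rabs (t a b c n) = v n * (p + INR n)) by (unfold v; field; lra).
        rewrite Ht. unfold z.
        assert (Hn1 : INR n >= 1) by (apply Rle_ge; apply (le_INR 1); lia).
        pose proof (Hvn n Hn). pose proof (Rle_abs p).
        pose proof (Rabs_pos p).
        assert (Rabs p * 1 <= Rabs p * INR n) by (apply Rmult_le_compat_l; lra).
        assert (p + INR n <= (1 + Rabs p) * INR n) by nra.
        replace ((1 + Rabs p) * (INR n * v n)) with (v n * ((1 + Rabs p) * INR n)) by ring.
        apply Rmult_le_compat_l; lra.
      * exact Hzcv.
Qed.

Definition alpha a b q := (q+1-a)*(q+1-b)/(q+1).
Definition term a b q c n := alpha a b q * (t a b c n * w (q+1) n) - (q+1-c) * (t a b c n * w q n).
Definition E a b q c N := sum_f_R0 (term a b q c) N.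
Definition Kc a b q c := c*((c+1-a-b)*(c-q-1) - (c-a)*(c-b)).

Lemma t_0 a b c : t a b c 0 = 1.
Proof. unfold t. simpl. field. Qed.

Lemma nonpole_shift c m : (forall k, c <> - INR k) -> forall k, c + INR m <> - INR k.
Proof. intros hc k E. apply (hc (k + m)%nat). rewrite plus_INR. lra. Qed.

Lemma nonpole_1 c : (forall k, c <> - INR k) -> forall k, c + 1 <> - INR k.
Proof. intros hc k E. apply (hc (S k)). rewrite S_INR. lra. Qed.

Lemma E_rel a b q c : q > -1 -> (forall k, c <> - INR k) -> forall N,
  c*(c+1-a-b)*E a b q c N - (c-a)*(c-b)*E a b q (c+1) N
  = Kc a b q c * INR (S N) * t a b c (S N) / (q + INR (S N)).
Proof.
  intros hq hc. pose proof (nonpole_1 c hc) as hc1.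
  assert (Hc0 : c <> 0) by (intro X; apply (hc O); simpl; lra).
  induction N.
  - unfold E. simpl sum_f_R0. unfold term. rewrite !t_0, !w_0.
    rewrite (t_S a b c 0) by auto. rewrite t_0. unfold alpha, Kc. simpl INR.
    field. repeat split; lra.
  - unfold E in *. rewrite !sum_S.
    set (m := INR (S N)).
    assert (Hm : m >= 1) by (unfold m; rewrite S_INR; pose proof (pos_INR N); lra).
    assert (HcS : c + m <> 0) by (unfold m; intro X; apply (hc (S N)); lra).
    replace (c * (c + 1 - a - b) * (sum_f_R0 (term a b q c) N + term a b q c (S N)) -
      (c - a) * (c - b) * (sum_f_R0 (term a b q (c + 1)) N + term a b q (c + 1) (S N)))
    with ((c * (c + 1 - a - b) * sum_f_R0 (term a b q c) N -
      (c - a) * (c - b) * sum_f_R0 (term a b q (c + 1)) N) +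
      (c * (c + 1 - a - b) * term a b q c (S N) - (c - a) * (c - b) * term a b q (c+1) (S N))) by ring.
    rewrite IHN. fold m.
    unfold term. rewrite (t_c1 a b c (S N)) by auto.
    rewrite (t_S a b c (S N)) by auto.
    rewrite !w_S by lra. fold m.
    rewrite (S_INR (S N)). fold m.
    set (X := t a b c (S N)). unfold alpha, Kc.
    field. repeat split; lra.
Qed.

Definition Hf a b q c := epsilon (inhabits 0) (fun l => Un_cv (E a b q c) l).

Lemma E_split a b q c N : E a b q c N =
  alpha a b q * sum_f_R0 (fun n => t a b c n * w (q+1) n) N
  - (q+1-c) * sum_f_R0 (fun n => t a b c n * w q n) N.
Proof.
  unfold E. induction N.
  - simpl. unfold term. ring.
  - rewrite !sum_S, IHN. unfold term. ring.
Qed.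

Lemma E_cv a b q c : q > -1 -> c + 1 > a + b -> (forall k, c <> - INR k) ->
  Un_cv (E a b q c) (Hf a b q c).
Proof.
  intros hq habc hc.
  destruct (hyp_cv a b c (q+1) habc hc ltac:(lra)) as [[l1 H1] _].
  destruct (hyp_cv a b c q habc hc hq) as [[l0 H0] _].
  assert (HE : Un_cv (E a b q c) (alpha a b q * l1 - (q+1-c) * l0)).
  { apply (cv_ext_ev (fun N => alpha a b q * sum_f_R0 (fun n => t a b c n * w (q+1) n) N
      - (q+1-c) * sum_f_R0 (fun n => t a b c n * w q n) N) _ 0).
    - intros. symmetry. apply E_split.
    - apply CV_minus; apply CV_mult; auto; apply cv_const. }
  unfold Hf. pose proof (epsilon_spec (inhabits 0) (fun l => Un_cv (E a b q c) l) (ex_intro _ _ HE)).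
  auto.
Qed.

Lemma cv0_abs_shift (u : nat -> R) : Un_cv u 0 -> Un_cv (fun n => Rabs (u (S n))) 0.
Proof.
  intros H eps Heps. destruct (H eps Heps) as [M HM]. exists M. intros n Hn.
  unfold R_dist in *. specialize (HM (S n) ltac:(lia)). rewrite Rminus_0_r in *. rewrite Rabs_Rabsolu. exact HM.
Qed.

Lemma H_rel a b q c : q > -1 -> c + 1 > a + b -> (forall k, c <> - INR k) ->
  c*(c+1-a-b)*Hf a b q c - (c-a)*(c-b)*Hf a b q (c+1) = 0.
Proof.
  intros hq habc hc.
  pose proof (E_cv a b q c hq habc hc) as Hc.
  pose proof (E_cv a b q (c+1) hq ltac:(lra) (nonpole_1 c hc)) as Hc1.
  assert (HL : Un_cv (fun N => c*(c+1-a-b)*E a b q c N - (c-a)*(c-b)*E a b q (c+1) N)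
     (c*(c+1-a-b)*Hf a b q c - (c-a)*(c-b)*Hf a b q (c+1))).
  { apply CV_minus; apply CV_mult; auto; apply cv_const. }
  assert (HR : Un_cv (fun N => c*(c+1-a-b)*E a b q c N - (c-a)*(c-b)*E a b q (c+1) N) 0).
  { apply (cv_ext_ev (fun N => Kc a b q c * INR (S N) * t a b c (S N) / (q + INR (S N))) _ 0).
    - intros. symmetry. apply E_rel; auto.
    - destruct (hyp_cv a b c q habc hc hq) as [_ Ht].
      refine (squeeze0 _ _ (Rabs (Kc a b q c) * (1 + / (q+1))) 0 _ (cv0_abs_shift _ Ht)).
      intros n _. cbv beta.
      set (m := INR (S n)). assert (Hm : m >= 1) by (unfold m; rewrite S_INR; pose proof (pos_INR n); lra).
      assert (Hqm : q + m > 0) by lra.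
      unfold Rdiv. rewrite !Rabs_mult. rewrite Rabs_inv. rewrite (Rabs_pos_eq m) by lra.
      rewrite (Rabs_pos_eq (q + m)) by lra.
      assert (Hb : m * / (q + m) <= 1 + / (q + 1)).
      { apply (Rmult_le_reg_r (q+m)); auto. rewrite Rmult_assoc, Rinv_l by lra.
        rewrite Rmult_plus_distr_r.
        assert (/ (q+1) * (q + m) >= 1).
        { apply Rle_ge. apply (Rmult_le_reg_l (q+1)). lra.
          rewrite <- Rmult_assoc, Rinv_r by lra. lra. }
        destruct (Rle_dec 0 q); nra. }
      pose proof (Rabs_pos (Kc a b q c)). pose proof (Rabs_pos (t a b c (S n))).
      pose proof (Rinv_0_lt_compat _ Hqm).
      replace (Rabs (Kc a b q c) * m * Rabs (t a b c (S n)) * / (q + m)) with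
        (Rabs (Kc a b q c) * Rabs (t a b c (S n)) * (m * / (q+m))) by ring.
      replace (Rabs (Kc a b q c) * (1 + / (q + 1)) * Rabs (t a b c (S n))) with
        (Rabs (Kc a b q c) * Rabs (t a b c (S n)) * (1 + / (q + 1))) by ring.
      apply Rmult_le_compat_l. apply Rmult_le_pos; auto. auto. }
  eapply UL_sequence; eauto.
Qed.

Lemma H_iter a b q c : q > -1 -> c + 1 > a + b -> (forall k, c <> - INR k) -> forall m,
  poch c m * poch (c+1-a-b) m * Hf a b q c = poch (c-a) m * poch (c-b) m * Hf a b q (c + INR m).
Proof.
  intros hq habc hc. induction m.
  - simpl INR. rewrite Rplus_0_r. simpl. ring.
  - rewrite !poch_S. rewrite S_INR. rewrite <- Rplus_assoc.
    pose proof (pos_INR m).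
    pose proof (H_rel a b q (c + INR m) hq ltac:(lra) (nonpole_shift c m hc)) as HR.
    transitivity ((c + INR m) * (c + 1 - a - b + INR m) * (poch c m * poch (c + 1 - a - b) m * Hf a b q c)).
    ring. rewrite IHm.
    transitivity (poch (c - a) m * poch (c - b) m *
      ((c + INR m) * (c + INR m + 1 - a - b) * Hf a b q (c + INR m))). ring.
    replace ((c + INR m) * (c + INR m + 1 - a - b) * Hf a b q (c + INR m)) with
      ((c + INR m - a) * (c + INR m - b) * Hf a b q (c + INR m + 1)) by lra.
    ring.
Qed.

Lemma poch_nonneg x n : 0 <= x -> 0 <= poch x n.
Proof.
  intros H. induction n. simpl; lra. rewrite poch_S. apply Rmult_le_pos; auto.
  pose proof (pos_INR n); lra.
Qed.

Lemma poch_abs x n : Rabs (poch x n) <= poch (Rabs x) n.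
Proof.
  induction n.
  - simpl. rewrite Rabs_R1. lra.
  - rewrite !poch_S. rewrite Rabs_mult. apply Rmult_le_compat; try apply Rabs_pos; auto.
    eapply Rle_trans. apply Rabs_triang. rewrite (Rabs_pos_eq (INR n)) by apply pos_INR. lra.
Qed.

Lemma pos_nonpole c : c > 0 -> forall k, c <> - INR k.
Proof. intros H k E. pose proof (pos_INR k). lra. Qed.

Lemma t_abs a b c n : c > 0 -> Rabs (t a b c n) <= t (Rabs a) (Rabs b) c n.
Proof.
  intros Hc. unfold t. pose proof (poch_pos c n Hc). pose proof (INR_fact_lt_0 n).
  unfold Rdiv. rewrite !Rabs_mult. rewrite Rabs_inv.
  rewrite (Rabs_pos_eq (poch c n * INR (fact n))) by (apply Rmult_le_pos; lra).
  apply Rmult_le_compat_r. left; apply Rinv_0_lt_compat; nra.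
  apply Rmult_le_compat; try apply Rabs_pos; apply poch_abs.
Qed.

Lemma t_nonneg A B c n : 0 <= A -> 0 <= B -> c > 0 -> 0 <= t A B c n.
Proof.
  intros HA HB Hc. unfold t. pose proof (poch_pos c n Hc). pose proof (INR_fact_lt_0 n).
  unfold Rdiv. apply Rmult_le_pos. apply Rmult_le_pos; apply poch_nonneg; auto.
  left; apply Rinv_0_lt_compat; nra.
Qed.

Lemma Vsum A B c : 0 <= A -> 0 <= B -> c >= 1 + 3*A + 3*B + 3*A*B -> forall N,
  sum_f_R0 (t A B c) N - t A B c 0 + INR N * t A B c N <= 2 * t A B c 1.
Proof.
  intros HA HB Hc.
  assert (Hc0 : c > 0) by nra.
  pose proof (pos_nonpole c Hc0) as hc.
  assert (Kum : forall n, (1 <= n)%nat -> (INR n + 2) * t A B c (S n) <= INR n * t A B c n).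
  { intros n Hn. rewrite t_S by auto. apply le_INR in Hn. simpl INR in Hn. rewrite S_INR.
    set (x := INR n) in *. pose proof (t_nonneg A B c n HA HB Hc0).
    set (T := t A B c n) in *.
    replace ((x + 2) * (T * ((A + x) * (B + x) / ((c + x) * (x + 1))))) with
      (T * ((x + 2) * (A + x) * (B + x) / ((c + x) * (x + 1)))) by (field; lra).
    rewrite (Rmult_comm x T). apply Rmult_le_compat_l; auto.
    apply (Rmult_le_reg_r ((c + x) * (x + 1))). nra.
    unfold Rdiv. rewrite Rmult_assoc, Rinv_l by nra.
    assert (Hx2 : x^2 >= 1) by nra.
    assert (HAB : A * B >= 0) by nra.
    assert (H0 : c - 1 - A - B >= 2*A*B) by nra.
    assert (H1 : (c - 1 - A - B) * x^2 >= 2*A*B).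
    { assert ((c - 1 - A - B) * x^2 >= (c - 1 - A - B) * 1) by (apply Rle_ge, Rmult_le_compat_l; lra). lra. }
    assert (H2 : (c - 2*A - 2*B - A*B) * x >= 0) by (apply Rle_ge, Rmult_le_pos; lra).
    replace ((x + 2) * (A + x) * (B + x)) with (x^3 + (2+A+B)*x^2 + (2*A+2*B+A*B)*x + 2*A*B) by ring.
    replace (x * ((c + x) * (x + 1))) with (x^3 + (1+c)*x^2 + c*x) by ring.
    nra. }
  pose proof (t_nonneg A B c 1 HA HB Hc0).
  induction N.
  - simpl. lra.
  - rewrite sum_S. rewrite S_INR. destruct N.
    + simpl. lra.
    + pose proof (Kum (S N) ltac:(lia)). rewrite S_INR in *. nra.
Qed.

Lemma lim_bound (u : nat -> R) l r K : Un_cv u l -> (forall n, Rabs (u n - r) <= K) -> Rabs (l - r) <= K.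
Proof.
  intros Hu Hb. destruct (Rle_dec (Rabs (l - r)) K) as [|Hn]; auto. exfalso.
  destruct (Hu (Rabs (l - r) - K) ltac:(lra)) as [M HM].
  specialize (HM M (le_n _)). specialize (Hb M). unfold R_dist in HM.
  assert (Rabs (l - r) <= Rabs (u M - l) + Rabs (u M - r)).
  { replace (l - r) with (- (u M - l) + (u M - r)) by ring.
    eapply Rle_trans. apply Rabs_triang. rewrite Rabs_Ropp. lra. }
  lra.
Qed.

Lemma H_asym a b q : q > -1 -> exists C1 Kb, forall c, c >= C1 ->
  Rabs (Hf a b q c - (c + alpha a b q - (q+1))) <= Kb.
Proof.
  intros hq.
  set (A := Rabs a). set (B := Rabs b).
  assert (HA : 0 <= A) by apply Rabs_pos. assert (HB : 0 <= B) by apply Rabs_pos.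
  set (al := alpha a b q).
  set (W := Rabs q / (q + 1)).
  assert (HW : 0 <= W) by (unfold W, Rdiv; apply Rmult_le_pos; [apply Rabs_pos | left; apply Rinv_0_lt_compat; lra]).
  exists (1 + 3*A + 3*B + 3*A*B + Rabs a + Rabs b + Rabs (q+1)).
  exists (2*A*B*(Rabs al + Rabs (q+1) * W) + 2*A*B*W).
  intros c Hc.
  pose proof (Rabs_pos (q+1)). pose proof (Rabs_pos al).
  assert (HABp : 0 <= A * B) by (apply Rmult_le_pos; auto).
  assert (Hc1 : c >= 1 + 3*A + 3*B + 3*A*B) by (unfold A, B in *; lra).
  assert (Hc0 : c >= 1) by lra.
  pose proof (pos_nonpole c ltac:(lra)) as hc.
  assert (habc : c + 1 > a + b) by (pose proof (Rle_abs a); pose proof (Rle_abs b); unfold A, B in *; lra).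
  set (M1 := Rabs al + (Rabs (q+1) + c) * W).
  assert (HM1 : 0 <= M1) by (unfold M1; nra).
  assert (Hterm : forall k, Rabs (term a b q c (S k)) <= M1 * t A B c (S k)).
  { intros k. unfold term. fold al. rewrite !w_S by lra.
    pose proof (t_abs a b c (S k) ltac:(lra)) as Ht. fold A B in Ht.
    set (T := t a b c (S k)) in *. set (m := INR (S k)).
    assert (Hm : m >= 1) by (unfold m; rewrite S_INR; pose proof (pos_INR k); lra).
    assert (Hw1 : Rabs ((q+1) / (q + 1 + m)) <= 1).
    { rewrite Rabs_pos_eq. apply (Rmult_le_reg_r (q+1+m)). lra. unfold Rdiv.
      rewrite Rmult_assoc, Rinv_l by lra. lra. apply Rdiv_le_0_compat; lra. }
    assert (Hw0 : Rabs (q / (q + m)) <= W).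
    { unfold Rdiv, W. rewrite Rabs_mult, Rabs_inv, (Rabs_pos_eq (q+m)) by lra.
      apply Rmult_le_compat_l. apply Rabs_pos. apply Rinv_le_contravar; lra. }
    assert (Hqc : Rabs (q + 1 - c) <= Rabs (q+1) + c).
    { unfold Rminus. eapply Rle_trans. apply Rabs_triang. rewrite Rabs_Ropp, (Rabs_pos_eq c) by lra. lra. }
    replace (al * (T * ((q + 1) / (q + 1 + m))) - (q + 1 - c) * (T * (q / (q + m)))) with
      (al * (T * ((q + 1) / (q + 1 + m))) + (- (q + 1 - c)) * (T * (q / (q + m)))) by ring.
    eapply Rle_trans. apply Rabs_triang. rewrite !Rabs_mult, Rabs_Ropp.
    pose proof (Rabs_pos T). pose proof (Rabs_pos ((q + 1) / (q + 1 + m))). pose proof (Rabs_pos (q / (q + m))).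
    pose proof (Rabs_pos (q + 1 - c)).
    assert (Rabs al * (Rabs T * Rabs ((q + 1) / (q + 1 + m))) <= Rabs al * t A B c (S k)).
    { apply Rmult_le_compat_l; auto. nra. }
    assert (Rabs (q + 1 - c) * (Rabs T * Rabs (q / (q + m))) <= (Rabs (q+1) + c) * W * t A B c (S k)).
    { replace ((Rabs (q+1) + c) * W * t A B c (S k)) with ((Rabs (q+1) + c) * (t A B c (S k) * W)) by ring.
      apply Rmult_le_compat; auto. apply Rmult_le_pos; auto. apply Rmult_le_compat; auto. }
    replace (M1 * t A B c (S k)) with (Rabs al * t A B c (S k) + (Rabs (q+1) + c) * W * t A B c (S k)) by (unfold M1; ring). lra. }
  assert (HE : forall N, Rabs (E a b q c N - term a b q c 0) <= M1 * (sum_f_R0 (t A B c) N - t A B c 0)).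
  { induction N.
    - simpl. unfold E. simpl. rewrite Rminus_diag, Rabs_R0. lra.
    - unfold E in *. rewrite !sum_S.
      replace (sum_f_R0 (term a b q c) N + term a b q c (S N) - term a b q c 0) with
        ((sum_f_R0 (term a b q c) N - term a b q c 0) + term a b q c (S N)) by ring.
      eapply Rle_trans. apply Rabs_triang. specialize (Hterm N). nra. }
  assert (Ht1 : t A B c 1 = A * B / c).
  { rewrite t_S by auto. rewrite t_0. simpl INR. field. lra. }
  assert (Hbound : forall N, Rabs (E a b q c N - (c + al - (q+1))) <=
        2*A*B*(Rabs al + Rabs (q+1) * W) + 2*A*B*W).
  { intros N. specialize (HE N). pose proof (Vsum A B c HA HB Hc1 N) as HV.
    pose proof (t_nonneg A B c N HA HB ltac:(lra)). pose proof (pos_INR N).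
    assert (Hterm0 : term a b q c 0 = c + al - (q+1)).
    { unfold term. rewrite t_0, !w_0. fold al. ring. }
    rewrite Hterm0 in HE.
    assert (sum_f_R0 (t A B c) N - t A B c 0 <= 2 * (A * B / c)) by nra.
    assert (M1 * (sum_f_R0 (t A B c) N - t A B c 0) <= M1 * (2 * (A*B/c))) by (apply Rmult_le_compat_l; auto).
    assert (HAB : 0 <= A * B / c) by (apply Rdiv_le_0_compat; nra).
    assert (M1 * (2 * (A*B/c)) = 2*A*B*(Rabs al + Rabs (q+1) * W)/c + 2*A*B*W) by (unfold M1; field; lra).
    assert (2*A*B*(Rabs al + Rabs (q+1) * W)/c <= 2*A*B*(Rabs al + Rabs (q+1) * W)).
    { assert (Hx : 0 <= 2*A*B*(Rabs al + Rabs (q+1) * W)) by (apply Rmult_le_pos; [nra | apply Rplus_le_le_0_compat; [auto | apply Rmult_le_pos; auto]]).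
      apply (Rmult_le_reg_r c). lra. unfold Rdiv. rewrite Rmult_assoc, Rinv_l by lra. nra. }
    lra. }
  apply (lim_bound (E a b q c)); auto.
  apply E_cv; auto.
Qed.

Lemma hyp_at1_eq a b c p l : p + 1 > 0 -> (forall k, c <> - INR k) ->
  Un_cv (fun N => sum_f_R0 (fun n => t a b c n * w p n) N) l -> hyp32_at1 a b p c (p+1) = l.
Proof.
  intros Hp hc H.
  assert (H' : Un_cv (fun N => sum_f_R0 (hyp32_term a b p c (p+1)) N) l).
  { apply (cv_ext_ev (fun N => sum_f_R0 (fun n => t a b c n * w p n) N) _ 0); auto.
    intros N _. apply sum_eq. intros i _. symmetry. apply hyp_term; auto. }
  unfold hyp32_at1.
  pose proof (epsilon_spec (inhabits 0) (fun l => Un_cv (fun N => sum_f_R0 (hyp32_term a b p c (p+1)) N) l)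
     (ex_intro _ l H')).
  eapply UL_sequence; eauto.
Qed.

Lemma cv_inv_S : Un_cv (fun n => / INR (S n)) 0.
Proof.
  intros eps Heps. destruct (INR_archimed eps 1 Heps) as [N HN]. exists N. intros n Hn.
  unfold R_dist. rewrite Rminus_0_r.
  assert (HS : INR (S n) >= INR N + 1) by (rewrite S_INR; apply Rle_ge; apply Rplus_le_compat_r, le_INR; lia).
  pose proof (pos_INR N).
  rewrite Rabs_pos_eq by (left; apply Rinv_0_lt_compat; lra).
  apply (Rmult_lt_reg_r (INR (S n))). lra. rewrite Rinv_l by lra. nra.
Qed.

Lemma cv_sub0 (y : nat -> R) l : Un_cv (fun n => y n - l) 0 -> Un_cv y l.
Proof.
  intros H eps Heps. destruct (H eps Heps) as [M HM]. exists M. intros n Hn.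
  specialize (HM n Hn). unfold R_dist in *. rewrite Rminus_0_r in HM. auto.
Qed.

Theorem lemma7p4 (a b c q : R)
  (habc : c + 1 > a + b)
  (hc : forall n : nat, c <> - INR n)
  (hq : q > -1) :
  (q + 1 - a) * (q + 1 - b) / (q + 1) * hyp32_at1 a b (q + 1) c (q + 1 + 1)
  - (q + 1 - c) * hyp32_at1 a b q c (q + 1)
  = rgamma (c - a) * rgamma (c - b) / (rgamma c * rgamma (c + 1 - a - b)).
Proof.
  destruct (rgamma_cv (c - a)) as [la [Hla _]].
  destruct (rgamma_cv (c - b)) as [lb [Hlb _]].
  destruct (rgamma_cv c) as [lc [Hlc Hlcnz]].
  destruct (rgamma_cv (c + 1 - a - b)) as [ld [Hld Hldnz]].
  specialize (Hlcnz hc). specialize (Hldnz (pos_nonpole (c + 1 - a - b) ltac:(lra))).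
  rewrite (rgamma_eq _ _ Hla), (rgamma_eq _ _ Hlb), (rgamma_eq _ _ Hlc), (rgamma_eq _ _ Hld).
  destruct (hyp_cv a b c (q+1) habc hc ltac:(lra)) as [[l1 H1] _].
  destruct (hyp_cv a b c q habc hc hq) as [[l0 H0] _].
  rewrite (hyp_at1_eq a b c (q+1) l1 ltac:(lra) hc H1).
  rewrite (hyp_at1_eq a b c q l0 ltac:(lra) hc H0).
  set (Hc := Hf a b q c).
  assert (HE : Hc = alpha a b q * l1 - (q+1-c) * l0).
  { assert (HE : Un_cv (E a b q c) (alpha a b q * l1 - (q+1-c) * l0)).
    { apply (cv_ext_ev (fun N => alpha a b q * sum_f_R0 (fun n => t a b c n * w (q+1) n) N
        - (q+1-c) * sum_f_R0 (fun n => t a b c n * w q n) N) _ 0).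
      - intros. symmetry. apply E_split.
      - apply CV_minus; apply CV_mult; auto; apply cv_const. }
    eapply UL_sequence. apply E_cv; auto. exact HE. }
  unfold alpha in HE. rewrite <- HE.
  set (y := fun n => Hf a b q (c + INR (S (S n))) / INR (S n)).
  assert (Hy : Un_cv y 1).
  { destruct (H_asym a b q hq) as [C1 [Kb HKb]].
    destruct (INR_archimed 1 (Rabs (C1 - c)) ltac:(lra)) as [N1 HN1]. rewrite Rmult_1_r in HN1.
    apply cv_sub0.
    refine (squeeze0 _ _ (Kb + Rabs (c + alpha a b q - q)) N1 _ cv_inv_S).
    intros n Hn. cbv beta. unfold y.
    assert (HC : c + INR (S (S n)) >= C1).
    { apply le_INR in Hn. rewrite !S_INR. pose proof (Rle_abs (C1 - c)). lra. }
    specialize (HKb _ HC).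
    set (M := INR (S n)). assert (HM : M >= 1) by (unfold M; rewrite S_INR; pose proof (pos_INR n); lra).
    assert (HSS : INR (S (S n)) = M + 1) by (unfold M; apply S_INR).
    set (h := Hf a b q (c + INR (S (S n)))) in *.
    rewrite HSS in HKb.
    replace (h / M - 1) with ((h - (c + (M + 1) + alpha a b q - (q + 1)) + (c + alpha a b q - q)) * / M)
      by (field; lra).
    rewrite Rabs_mult. rewrite Rabs_pos_eq with (x := / M) by (left; apply Rinv_0_lt_compat; lra).
    apply Rmult_le_compat_r. left; apply Rinv_0_lt_compat; lra.
    eapply Rle_trans. apply Rabs_triang. lra. }
  assert (Heq : forall n, rgamma_seq (c - a) n * rgamma_seq (c - b) n * y n =
      Hc * (rgamma_seq c n * rgamma_seq (c + 1 - a - b) n)).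
  { intros n. unfold y, rgamma_seq. rewrite !prod_poch.
    pose proof (H_iter a b q c hq habc hc (S (S n))) as HI. fold Hc in HI.
    set (M := INR (S n)). assert (HM : M > 0) by (unfold M; apply lt_0_INR; lia).
    assert (HR : Rpower M c * Rpower M (c + 1 - a - b) = M * (Rpower M (c - a) * Rpower M (c - b))).
    { rewrite <- !Rpower_plus. replace (c + (c + 1 - a - b)) with ((c - a + (c - b)) + 1) by ring.
      rewrite Rpower_plus, Rpower_1 by auto. ring. }
    set (F := INR (fact (S n))). assert (HF : F > 0) by apply INR_fact_lt_0.
    set (Rc := Rpower M c) in *. set (Rd := Rpower M (c + 1 - a - b)) in *.
    set (Ra := Rpower M (c - a)) in *. set (Rb := Rpower M (c - b)) in *.
    assert (Rc > 0) by apply Rpower_gt0. assert (Rd > 0) by apply Rpower_gt0.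
    assert (Ra > 0) by apply Rpower_gt0. assert (Rb > 0) by apply Rpower_gt0.
    set (Hm := Hf a b q (c + INR (S (S n)))) in *.
    transitivity (poch (c - a) (S (S n)) * poch (c - b) (S (S n)) * Hm / (F * F * Ra * Rb * M)).
    { field. repeat split; lra. }
    rewrite <- HI.
    transitivity (poch c (S (S n)) * poch (c + 1 - a - b) (S (S n)) * Hc / (F * F * (Rc * Rd))).
    { rewrite HR. field. repeat split; lra. }
    field. repeat split; lra. }
  assert (HL1 : Un_cv (fun n => rgamma_seq (c - a) n * rgamma_seq (c - b) n * y n) (la * lb * 1)).
  { apply CV_mult; auto. apply CV_mult; auto. }
  assert (HL2 : Un_cv (fun n => rgamma_seq (c - a) n * rgamma_seq (c - b) n * y n) (Hc * (lc * ld))).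
  { apply (cv_ext_ev (fun n => Hc * (rgamma_seq c n * rgamma_seq (c + 1 - a - b) n)) _ 0).
    - intros. symmetry. apply Heq.
    - apply CV_mult. apply cv_const. apply CV_mult; auto. }
  pose proof (UL_sequence _ _ _ HL1 HL2) as HU.
  rewrite Rmult_1_r in HU. rewrite HU. field. split; auto.
Qed.
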